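(* Let $n\ge3$, $1\le k\le n/2$ and $0<a_1\le\dots\le a_{n+1}$ with $a_{n+1}\le a_1\big(\frac{n}{n-k}\big)^{1/6}$. Then the ellipsoid $\{x\in\mathbb{R}^{n+1}:\sum_{i=1}^{n+1}x_i^2/a_i^2=1\}$ satisfies $S\le a(n,k,H,0)$ at every point.
   Context: For a hypersurface in $\mathbb{R}^{n+1}$ with principal curvatures $\lambda_i$, $S=\sum\lambda_i^2$ and $H=\frac1n|\sum\lambda_i|$. For $1\le k\le n/2$, $a(n,k,t,0)=\frac{n^2t^2}{n-k}$. *)

(* Defs.v *)
From HB Require Import structures.
From mathcomp Require Import all_boot all_order all_algebra.
From mathcomp Require Import all_classical all_reals all_analysis.
Set Implicit Arguments. Unset Strict Implicit. Unset Printing Implicit Defensive.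
Import Order.TTheory GRing.Theory Num.Theory.
Local Open Scope ring_scope.

Definition ellF (R : realType) (m : nat) (a : 'I_m -> R) (x : 'rV[R]_m) : R :=
  \sum_(i < m) (x 0 i) ^+ 2 / (a i) ^+ 2.

Definition ellGrad (R : realType) (m : nat) (a : 'I_m -> R) (x : 'rV[R]_m)
  : 'rV[R]_m := \row_i (2 * x 0 i / (a i) ^+ 2).

Definition ellHess (R : realType) (m : nat) (a : 'I_m -> R) : 'M[R]_m :=
  \matrix_(i, j) (if i == j then 2 / (a i) ^+ 2 else 0).

Definition rnorm (R : realType) (m : nat) (v : 'rV[R]_m) : R :=
  Num.sqrt (\sum_(i < m) (v 0 i) ^+ 2).

Definition tangent_frame (R : realType) (n : nat) (a : 'I_n.+1 -> R)
  (x : 'rV[R]_n.+1) (E : 'M[R]_(n, n.+1)) : Prop :=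
  E *m E^T = 1%:M /\ E *m (ellGrad a x)^T = 0.

(* Matrix (h_ij) of the second fundamental form of the level set {F = 1}
   in the tangent frame E, w.r.t. the unit normal grad F/|grad F|:
   h_ij = Hess F (e_i, e_j) / |grad F|.  Its eigenvalues are the principal
   curvatures lambda_1..lambda_n. *)
Definition sff (R : realType) (n : nat) (a : 'I_n.+1 -> R)
  (x : 'rV[R]_n.+1) (E : 'M[R]_(n, n.+1)) : 'M[R]_n :=
  (rnorm (ellGrad a x))^-1 *: (E *m ellHess a *m E^T).

(* S = sum_i lambda_i^2 = sum_{i,j} h_ij^2 *)
Definition Ssq (R : realType) (n : nat) (h : 'M[R]_n) : R :=
  \sum_(i < n) \sum_(j < n) (h i j) ^+ 2.

(* H = (1/n) |sum_i lambda_i| = |tr h| / n *)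
Definition Hmean (R : realType) (n : nat) (h : 'M[R]_n) : R :=
  `|\tr h| / n%:R.

Definition a_bound (R : realType) (n k : nat) (t : R) : R :=
  (n%:R) ^+ 2 * t ^+ 2 / (n - k)%:R.

(* Main.v *)
Require Import Defs.
From HB Require Import structures.
From mathcomp Require Import all_boot all_order all_algebra.
From mathcomp Require Import all_classical all_reals all_analysis.
From mathcomp Require Import ring lra.
Import Order.TTheory GRing.Theory Num.Theory.
Local Open Scope ring_scope.


Lemma key (R : realFieldType) n (E : 'M[R]_(n, n.+1)) (d : 'I_n.+1 -> R) m M :
  E *m E^T = 1%:M -> 0 <= m -> (forall i, m <= d i <= M) ->
  let B := E *m diag_mx (\row_i d i) *m E^T in
  n%:R * m <= \tr B /\ \tr (B *m B^T) <= M * \tr B.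
Proof.
move=> EE m0 dB B.
set D := diag_mx (\row_i d i).
set P := E^T *m E.
have PT : P^T = P by rewrite /P trmx_mul trmxK.
have Psym i j : P j i = P i j by rewrite -[in LHS]PT mxE.
have PP : P *m P = P by rewrite /P mulmxA -(mulmxA E^T) EE mulmx1.
have BT : B^T = B by rewrite /B !trmx_mul trmxK tr_diag_mx mulmxA.
have trB : \tr B = \tr (D *m P).
  by rewrite /B /P -mulmxA mxtrace_mulC !mulmxA.
have trBB : \tr (B *m B^T) = \tr ((D *m P) *m (D *m P)).
  by rewrite BT /B /P -!mulmxA mxtrace_mulC !mulmxA.
have QE i j : (D *m P) i j = d i * P i j by rewrite mul_diag_mx !mxE.
have Pii i : P i i = \sum_j P i j ^+ 2.
  by rewrite -{1}PP mxE; apply: eq_bigr => j _; rewrite Psym expr2.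
have Pii0 i : 0 <= P i i by rewrite Pii; apply: sumr_ge0 => j _; apply: sqr_ge0.
have d0 i : 0 <= d i by case/andP: (dB i) => /(le_trans m0).
have trQ : \tr (D *m P) = \sum_i d i * P i i.
  by rewrite /mxtrace; apply: eq_bigr => i _; rewrite QE.
split.
  have -> : n%:R = \tr P by rewrite /P mxtrace_mulC EE mxtrace1.
  rewrite trB trQ /mxtrace mulr_suml; apply: ler_sum => i _.
  by rewrite mulrC; apply: ler_wpM2r => //; case/andP: (dB i).
rewrite trBB trB trQ mulr_sumr /mxtrace; apply: ler_sum => i _.
rewrite mxE Pii mulr_sumr mulr_sumr; apply: ler_sum => j _.
rewrite !QE Psym.
have : d j <= M by case/andP: (dB j).
have := d0 i; have := d0 j; have := sqr_ge0 (P j i).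
rewrite expr2; set p := P j i; set x := d i; set y := d j => h1 h2 h3 h4.
rewrite -subr_ge0.
have -> : M * (x * p ^+ 2) - x * p * (y * p) = (M - y) * (x * (p * p)) by ring.
by apply: mulr_ge0; [rewrite subr_ge0 | apply: mulr_ge0].
Qed.

Theorem mainTheorem8 (R : realType) (n k : nat) (a : 'I_n.+1 -> R) :
  (3 <= n)%N -> (1 <= k)%N -> (k.*2 <= n)%N ->
  0 < a ord0 ->
  (forall i j : 'I_n.+1, (i <= j)%N -> a i <= a j) ->
  a ord_max <= a ord0 * ((n%:R / (n - k)%:R) `^ (6%:R^-1)) ->
  forall (x : 'rV[R]_n.+1), ellF a x = 1 ->
  forall (E : 'M[R]_(n, n.+1)), tangent_frame a x E ->
  Ssq (sff a x E) <= a_bound n k (Hmean (sff a x E)).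
Proof.
move=> n3 k1 k2n a0p amono hmax x _ E [EE _].
set a0 := a ord0 in a0p amono hmax *.
set am := a ord_max in hmax *.
have a0i i : a0 <= a i by apply: amono.
have aim i : a i <= am by apply: amono; rewrite /= -ltnS.
have aip i : 0 < a i by apply: lt_le_trans (a0i i).
have amp : 0 < am by apply: aip.
set N : R := n%:R. set K : R := (n - k)%:R.
have Np : 0 < N by rewrite ltr0n; apply: leq_trans n3.
have Kp : 0 < K by rewrite ltr0n subn_gt0; apply: leq_trans k2n; rewrite -addnn -addn1 leq_add2l.
set c := N / K.
set t := c `^ 6%:R^-1 in hmax.
have t0 : 0 <= t by apply: powR_ge0.
have t6 : t ^+ 6 = c.
  rewrite /t -powR_mulrn // -powRrM mulVf ?powRr1 //.
  all: try by rewrite divr_ge0 // ltW.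
  all: try by rewrite pnatr_eq0.
have t1 : 1 <= t.
  by rewrite -(ler_pM2l a0p) mulr1; apply: le_trans hmax; apply: a0i.
have t26 : t ^+ 2 <= c.
  by rewrite -t6 (_ : 6 = 2 + 4)%N // exprD ler_peMr ?exprn_ege1 // exprn_ge0.
have am2 : am ^+ 2 <= a0 ^+ 2 * c.
  apply: (@le_trans _ _ ((a0 * t) ^+ 2)).
    by rewrite lerXn2r // nnegrE ?(ltW amp) // mulr_ge0 // ltW.
  by rewrite exprMn ler_wpM2l // exprn_ge0 // ltW.
have Kam : K * am ^+ 2 <= N * a0 ^+ 2.
  apply: (@le_trans _ _ (K * (a0 ^+ 2 * c))); first by rewrite ler_wpM2l // ltW.
  by rewrite /c le_eqVlt; apply/orP; left; apply/eqP; field; rewrite gt_eqF.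
set d := fun i => 2 / a i ^+ 2.
set m := 2 / am ^+ 2. set M := 2 / a0 ^+ 2.
have dB i : m <= d i <= M.
  have h2 : forall u v : R, 0 < u -> u <= v -> 2 / v ^+ 2 <= 2 / u ^+ 2.
    move=> u v up uv; have vp : 0 < v by apply: lt_le_trans uv.
    rewrite ler_pM2l // lef_pV2 ?posrE ?exprn_gt0 //.
    by rewrite lerXn2r // nnegrE ltW.
  by rewrite h2 ?h2.
have m0 : 0 <= m by rewrite divr_ge0 // exprn_ge0 // ltW.
have KM : K * M <= N * m.
  have e1 : K * M = (K * am ^+ 2) * (2 / (a0 ^+ 2 * am ^+ 2)).
    by rewrite /M; field; rewrite !gt_eqF.
  have e2 : N * m = (N * a0 ^+ 2) * (2 / (a0 ^+ 2 * am ^+ 2)).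
    by rewrite /m; field; rewrite !gt_eqF.
  by rewrite e1 e2 ler_wpM2r // divr_ge0 // mulr_ge0 // exprn_ge0 // ltW.
have Hess : ellHess a = diag_mx (\row_i d i).
  apply/matrixP => i j; rewrite !mxE.
  by case: eqP => [->|]; rewrite ?mulr1n ?mulr0n.
have [h1 h2] := @key R n E d m M EE m0 dB.
move: h1 h2.
set B := E *m _ *m E^T => h1 h2.
have sffE : sff a x E = (rnorm (ellGrad a x))^-1 *: B by rewrite /sff Hess.
rewrite sffE.
set g := (rnorm (ellGrad a x))^-1.
set T := \tr B. set S := \tr (B *m B^T).
have SsqE : Ssq (g *: B) = g ^+ 2 * S.
  rewrite /Ssq /S /mxtrace mulr_sumr; apply: eq_bigr => i _.
  rewrite !mxE mulr_sumr; apply: eq_bigr => j _.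
  by rewrite !mxE exprMn expr2.
have T0 : 0 <= T by apply: le_trans h1; rewrite mulr_ge0 // ltW.
have key2 : S * K <= T ^+ 2.
  apply: (@le_trans _ _ (K * (M * T))); first by rewrite mulrC ler_wpM2l // ltW.
  apply: (@le_trans _ _ (N * m * T)); first by rewrite mulrA ler_wpM2r.
  by rewrite expr2 ler_wpM2r.
rewrite SsqE /a_bound /Hmean mxtraceZ -/N -/K expr_div_n real_normK ?num_real //.
have -> : N ^+ 2 * ((g * T) ^+ 2 / N ^+ 2) / K = g ^+ 2 * (T ^+ 2 / K).
  by field; rewrite !gt_eqF.
by rewrite ler_wpM2l ?sqr_ge0 // ler_pdivlMr.
Qed.
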